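(* Let $G$ be a connected graph and $U\subseteq V(G)$ such that every $U$-rooted minor of $G$ with countable branch sets has countable colouring number. Then every branch of a slim $U$-rooted normal semi-partition tree $(T,\mathcal V)$ of $G$ is at most countable; in particular, all bags $V_t$ are countable.
   Context: Minors are given by disjoint connected branch sets; a minor is $U$-rooted if every branch set meets $U$. Countable colouring number: a well-order of the vertices in which each vertex is preceded by only finitely many neighbours. An order tree is a poset with unique minimal element in which every down-closure $\lceil t\rceil$ is well-ordered; a branch is a maximal chain; $\mathring{\lceil t\rceil}=\lceil t\rceil\setminus\{t\}$; height of $t$ = order type of $\mathring{\lceil t\rceil}$. A $T$-graph is a graph on $T$ whose edges have comparable endvertices and in which the lower neighbours of each $t$ are cofinal in $\mathring{\lceil t\rceil}$. $(T,(V_t)_{t\in T})$ with nonempty $V_t\subseteq V(G)$ is a normal semi-partition tree if the $V_t$ are pairwise disjoint, each $G[V_t]$ connected, contracting each $V_t$ in $G[\bigcup V_t]$ gives a $T$-graph, and for every path in $G$ with at least one edge, endvertices in $V_t$, $V_{t'}$, inner vertices outside $\bigcup V_s$ and no edges inside $G[\bigcup V_s]$, $t,t'$ are comparable. Slim: $|V_t|\le|\mathrm{height}(t)|+\aleph_0$; $U$-rooted: each $V_t$ meets $U$. *)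

(* Defs.v *)
From Stdlib Require Import List.
Import ListNotations.
Set Implicit Arguments.

Definition countable_set (A : Type) (P : A -> Prop) : Prop :=
  exists f : A -> nat, forall x y, P x -> P y -> f x = f y -> x = y.

Definition finite_set (A : Type) (P : A -> Prop) : Prop :=
  exists l : list A, forall x, P x -> In x l.

Definition simple_graph (V : Type) (adj : V -> V -> Prop) : Prop :=
  (forall x y, adj x y -> adj y x) /\ (forall x, ~ adj x x).

Fixpoint consec (V : Type) (R : V -> V -> Prop) (p : list V) : Prop :=
  match p with
  | x :: ((y :: _) as q) => R x y /\ consec R q
  | _ => True
  end.

Definition is_path (V : Type) (adj : V -> V -> Prop) (p : list V) : Prop :=
  NoDup p /\ consec adj p.

Definition connected_set (V : Type) (adj : V -> V -> Prop) (X : V -> Prop) : Prop :=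
  (exists x, X x) /\
  forall x y, X x -> X y ->
    exists l : list V, is_path adj (x :: l) /\ last (x :: l) x = y /\
                       Forall X (x :: l).

Definition connected_graph (V : Type) (adj : V -> V -> Prop) : Prop :=
  connected_set adj (fun _ => True).

Definition rooted_countable_minor_model (V : Type) (adj : V -> V -> Prop)
  (U : V -> Prop) (I : Type) (adjH : I -> I -> Prop) (B : I -> V -> Prop) : Prop :=
  (forall x, connected_set adj (B x)) /\
  (forall x y v, x <> y -> B x v -> B y v -> False) /\
  (forall x, exists u, B x u /\ U u) /\
  (forall x, countable_set (B x)) /\
  (forall x y, adjH x y -> exists u v, B x u /\ B y v /\ adj u v).

Definition strict_well_order (I : Type) (R : I -> I -> Prop) : Prop :=
  (forall x, ~ R x x) /\
  (forall x y z, R x y -> R y z -> R x z) /\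
  (forall x y, x = y \/ R x y \/ R y x) /\
  well_founded R.

Definition countable_colouring_number (I : Type) (adjH : I -> I -> Prop) : Prop :=
  exists R : I -> I -> Prop, strict_well_order R /\
    forall x, finite_set (fun y => R y x /\ adjH x y).

Section OrderTree.
Variables (T : Type) (le : T -> T -> Prop).

Definition lt_of (s t : T) : Prop := le s t /\ s <> t.

Definition comparable (s t : T) : Prop := le s t \/ le t s.

Definition well_ordered_on (P : T -> Prop) : Prop :=
  (forall x y, P x -> P y -> comparable x y) /\
  (forall Q : T -> Prop, (exists x, P x /\ Q x) ->
     exists m, P m /\ Q m /\ forall y, P y -> Q y -> le m y).

Definition order_tree : Prop :=
  (forall x, le x x) /\
  (forall x y, le x y -> le y x -> x = y) /\
  (forall x y z, le x y -> le y z -> le x z) /\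
  (exists! r, forall s, le s r -> s = r) /\
  (forall t, well_ordered_on (fun s => le s t)).

Definition chain (C : T -> Prop) : Prop :=
  forall x y, C x -> C y -> comparable x y.

Definition branch (C : T -> Prop) : Prop :=
  chain C /\ forall C', chain C' -> (forall x, C x -> C' x) ->
                        forall x, C' x -> C x.

Definition T_graph (adjT : T -> T -> Prop) : Prop :=
  (forall s t, adjT s t -> comparable s t) /\
  (forall t s, lt_of s t -> exists u, adjT u t /\ lt_of u t /\ le s u).

End OrderTree.

Section NST.
Variables (V : Type) (adj : V -> V -> Prop) (T : Type) (le : T -> T -> Prop)
          (Vb : T -> V -> Prop).

Definition in_union (v : V) : Prop := exists s, Vb s v.

(* the graph on T obtained from G[\bigcup V_t] by contracting each V_t *)
Definition contracted_adj (s t : T) : Prop :=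
  s <> t /\ exists u v, Vb s u /\ Vb t v /\ adj u v.

Definition normal_semi_partition_tree : Prop :=
  order_tree le /\
  (forall t, exists v, Vb t v) /\
  (forall s t v, s <> t -> Vb s v -> Vb t v -> False) /\
  (forall t, connected_set adj (Vb t)) /\
  T_graph le contracted_adj /\
  (* the path x :: l ++ [y] has >= 1 edge, ends in V_t and V_t', inner
     vertices outside \bigcup V_s, and no edge inside G[\bigcup V_s] *)
  (forall (t t' : T) (x y : V) (l : list V),
     is_path adj (x :: l ++ [y]) ->
     Vb t x -> Vb t' y ->
     Forall (fun v => ~ in_union v) l ->
     consec (fun a b => ~ (in_union a /\ in_union b)) (x :: l ++ [y]) ->
     comparable le t t').

(* slim: |V_t| <= |height(t)| + aleph_0, where |height(t)| is the
   cardinality of the strict down-closure of t; expressed as an injection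
   of V_t into (strict down-closure of t) + nat *)
Definition slim : Prop :=
  forall t, exists f : V -> T + nat,
    (forall x y, Vb t x -> Vb t y -> f x = f y -> x = y) /\
    (forall x s, Vb t x -> f x = inl s -> lt_of le s t).

Definition U_rooted (U : V -> Prop) : Prop :=
  forall t, exists u, Vb t u /\ U u.

End NST.

(* Main.v *)
Require Import Defs.
From Stdlib Require Import List Arith Lia Classical ClassicalEpsilon ProofIrrelevance.
From Stdlib Require Cantor.
Import ListNotations.

Definition enum (A : Type) (P : A -> Prop) : Prop :=
  exists e : nat -> option A, forall x, P x -> exists n, e n = Some x.
Arguments enum {A} P.

Lemma countable_enum A (P : A -> Prop) : countable_set P -> enum P.
Proof.
  intros [f Hf].
  exists (fun n => match excluded_middle_informative (exists x, P x /\ f x = n) with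
                | left h => Some (proj1_sig (constructive_indefinite_description _ h))
                | right _ => None end).
  intros x Px. exists (f x).
  destruct (excluded_middle_informative _) as [h|h].
  - destruct (constructive_indefinite_description _ h) as [y [Py Hy]]; simpl.
    f_equal. apply Hf; auto.
  - exfalso; apply h; eauto.
Qed.

Lemma enum_countable A (P : A -> Prop) : enum P -> countable_set P.
Proof.
  intros [e He].
  exists (fun x => match excluded_middle_informative (exists n, e n = Some x) with
                | left h => proj1_sig (constructive_indefinite_description _ h)
                | right _ => 0 end).
  intros x y Px Py.
  destruct (excluded_middle_informative (exists n, e n = Some x)) as [hx|hx];
  [| exfalso; apply hx; auto].
  destruct (excluded_middle_informative (exists n, e n = Some y)) as [hy|hy];
  [| exfalso; apply hy; auto].
  destruct (constructive_indefinite_description _ hx) as [n Hn].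
  destruct (constructive_indefinite_description _ hy) as [m Hm]. simpl.
  intros ->. congruence.
Qed.

Lemma enum_sub A (P Q : A -> Prop) : enum Q -> (forall x, P x -> Q x) -> enum P.
Proof. intros [e He] H. exists e. auto. Qed.

Lemma enum_list A (l : list A) : enum (fun x => In x l).
Proof. exists (nth_error l). intros x Hx. apply In_nth_error; auto. Qed.

Lemma enum_nat_union A (P : nat -> A -> Prop) :
  (forall n, enum (P n)) -> enum (fun x => exists n, P n x).
Proof.
  intros H.
  exists (fun m => let (i, j) := Cantor.of_nat m in
            proj1_sig (constructive_indefinite_description _ (H i)) j).
  intros x [n Hn].
  destruct (proj2_sig (constructive_indefinite_description _ (H n)) x Hn) as [j Hj].
  exists (Cantor.to_nat (n, j)). rewrite Cantor.cancel_of_to. exact Hj.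
Qed.

Lemma enum_union A B (Q : B -> Prop) (P : B -> A -> Prop) :
  enum Q -> (forall b, Q b -> enum (P b)) ->
  enum (fun x => exists b, Q b /\ P b x).
Proof.
  intros [e He] H.
  apply enum_sub with (Q := fun x => exists n, exists b, e n = Some b /\ Q b /\ P b x).
  - apply enum_nat_union. intros n.
    destruct (e n) as [b|] eqn:Eb.
    + destruct (classic (Q b)) as [Qb|Qb].
      * apply enum_sub with (P b); [apply H; auto|].
        intros x [b' [E1 [_ HP]]]. inversion E1; subst; auto.
      * exists (fun _ => None). intros x [b' [E1 [Qb' _]]]. inversion E1; subst; contradiction.
    + exists (fun _ => None). intros x [b' [E1 _]]. discriminate.
  - intros x [b [Qb Pb]]. destruct (He b Qb) as [n Hn]. eauto.
Qed.

Lemma enum_or A (P Q : A -> Prop) : enum P -> enum Q -> enum (fun x => P x \/ Q x).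
Proof.
  intros HP HQ.
  apply enum_sub with (Q := fun x => exists n : nat, (match n with 0 => P | _ => Q end) x).
  - apply enum_nat_union. intros [|n]; auto.
  - intros x [h|h]; [exists 0 | exists 1]; auto.
Qed.

Lemma enum_sig T (D P : T -> Prop) : enum P -> enum (fun a : {t | D t} => P (proj1_sig a)).
Proof.
  intros [e He].
  exists (fun n => match e n with
                | Some s => match excluded_middle_informative (D s) with
                            | left h => Some (exist _ s h) | right _ => None end
                | None => None end).
  intros [s h] Ps. simpl in Ps. destruct (He s Ps) as [n Hn]. exists n. rewrite Hn.
  destruct (excluded_middle_informative (D s)) as [h'|h']; [|contradiction].
  f_equal. f_equal. apply proof_irrelevance.
Qed.

Lemma enum_unsig T (D : T -> Prop) : enum (fun _ : {t | D t} => True) -> enum D.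
Proof.
  intros [e He]. exists (fun n => option_map (@proj1_sig _ _) (e n)).
  intros x Dx. destruct (He (exist _ x Dx) I) as [n Hn]. exists n. rewrite Hn. reflexivity.
Qed.

Lemma pure (I : Type) (leI : I -> I -> Prop) (adjH : I -> I -> Prop) (R : I -> I -> Prop)
  (Hrefl : forall x, leI x x)
  (Hanti : forall x y, leI x y -> leI y x -> x = y)
  (Htrans : forall x y z, leI x y -> leI y z -> leI x z)
  (Htot : forall x y, leI x y \/ leI y x)
  (Hleast : forall Q : I -> Prop, (exists x, Q x) -> exists m, Q m /\ forall y, Q y -> leI m y)
  (Hdown : forall a, enum (fun b => leI b a))
  (Hunc : ~ enum (fun _ : I => True))
  (Htg : forall a b, leI b a -> b <> a -> exists u, adjH u a /\ leI u a /\ u <> a /\ leI b u)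
  (Hsym : forall a b, adjH a b -> adjH b a)
  (HRtot : forall a b, a = b \/ R a b \/ R b a)
  (Hfin : forall a, exists l, forall y, R y a -> adjH a y -> In y l) : False.
Proof.
  set (L := fun a => proj1_sig (constructive_indefinite_description _ (Hfin a))).
  assert (HL : forall a y, R y a -> adjH a y -> In y (L a)).
  { intros a. exact (proj2_sig (constructive_indefinite_description _ (Hfin a))). }
  assert (Hbound : forall X : I -> Prop, enum X -> exists z, forall x, X x -> leI x z /\ x <> z).
  { intros X HX.
    assert (HW : enum (fun y => exists x, X x /\ leI y x))
      by (apply (enum_union _ _ (X) (fun x y => leI y x)); auto).
    destruct (classic (exists z, ~ (exists x, X x /\ leI z x))) as [[z Hz]|Hn].
    - exists z. intros x Xx. destruct (Htot x z) as [h|h].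
      + split; auto. intros ->. apply Hz. eauto.
      + exfalso; apply Hz; eauto.
    - exfalso. apply Hunc. apply enum_sub with (1 := HW). intros y _.
      apply NNPP. intros Hy. apply Hn. eauto. }
  assert (Hnext : forall a, exists z, leI a z /\ a <> z /\
                   forall b y, leI b a -> In y (L b) -> leI y z).
  { intros a.
    destruct (Hbound (fun y => leI y a \/ exists b, leI b a /\ In y (L b))) as [z Hz].
    - apply enum_or; [apply Hdown|].
      apply (enum_union _ _ (fun b => leI b a) (fun b y => In y (L b))); [apply Hdown|].
      intros b _. apply enum_list.
    - exists z. split; [|split].
      + apply (Hz a). left; auto.
      + apply (Hz a). left; auto.
      + intros b y Hb Hy. apply (Hz y). right; eauto. }
  set (next := fun a => proj1_sig (constructive_indefinite_description _ (Hnext a))).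
  assert (Hnx : forall a, leI a (next a) /\ a <> next a /\
                 forall b y, leI b a -> In y (L b) -> leI y (next a)).
  { intros a. exact (proj2_sig (constructive_indefinite_description _ (Hnext a))). }
  destruct (classic (exists x : I, True)) as [[x0 _]|Hne].
  2:{ apply Hunc. exists (fun _ => None). intros x; exfalso; eauto. }
  set (x := fun n => Nat.iter n next x0).
  assert (HxS : forall n, x (S n) = next (x n)) by reflexivity.
  assert (Hmono : forall n m, n <= m -> leI (x n) (x m)).
  { intros n m H. induction H; auto. eapply Htrans; [exact IHle|].
    rewrite HxS. apply Hnx. }
  set (S := fun y => exists n, leI y (x n)).
  assert (HS : enum S) by (apply enum_nat_union; intros n; apply Hdown).
  destruct (Hleast (fun y => ~ S y)) as [al [Hal Hmin]].
  { apply NNPP. intros Hn. apply Hunc. apply enum_sub with (1 := HS).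
    intros y _. apply NNPP. intros Hy. apply Hn. eauto. }
  assert (Hbelow : forall y, leI y al -> y <> al -> S y).
  { intros y H1 H2. apply NNPP. intros Hy. apply H2. apply Hanti; auto. }
  assert (Hsn : forall n, leI (x n) al /\ x n <> al).
  { intros n. destruct (Htot (x n) al) as [h|h].
    - split; auto. intros E. apply Hal. exists n. rewrite E; auto.
    - exfalso. apply Hal. exists n. auto. }
  assert (Hlow : forall u, adjH u al -> leI u al -> u <> al -> In u (L al)).
  { intros u Ha Hle Hne'. destruct (Hbelow u Hle Hne') as [n Hn].
    destruct (HRtot al u) as [E|[E|E]].
    - subst; contradiction.
    - exfalso. apply Hal. exists (Datatypes.S n). rewrite HxS.
      apply (proj2 (proj2 (Hnx (x n))) u al Hn). apply HL; auto.
    - apply HL; auto. }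
  assert (Hmax : forall l : list I, exists N, forall y, In y l -> S y -> leI y (x N)).
  { induction l as [|a l [N HN]].
    - exists 0. intros y [].
    - destruct (classic (S a)) as [[k Hk]|Hk].
      + exists (Nat.max N k). intros y [<-|Hy] Sy.
        * eapply Htrans; [exact Hk|]. apply Hmono; lia.
        * eapply Htrans; [apply HN; auto|]. apply Hmono; lia.
      + exists N. intros y [<-|Hy] Sy; [contradiction|]. auto. }
  destruct (Hmax (L al)) as [N HN].
  destruct (Hsn (Datatypes.S N)) as [H1 H2].
  destruct (Htg al _ H1 H2) as [u [Hu1 [Hu2 [Hu3 Hu4]]]].
  assert (Hu5 : leI u (x N)).
  { apply HN; [apply Hlow; auto|]. apply Hbelow; auto. }
  assert (E : x N = x (Datatypes.S N)).
  { apply Hanti; [apply Hmono; lia|]. eapply Htrans; eauto. }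
  rewrite HxS in E. apply (proj1 (proj2 (Hnx (x N)))). exact E.
Qed.

Lemma vb_count (V T : Type) (le : T -> T -> Prop) (Vb : T -> V -> Prop) :
  slim le Vb -> forall t, enum (fun s => le s t) -> countable_set (Vb t).
Proof.
  intros Hs t He. destruct (Hs t) as [f [Hf Hlt]].
  destruct (enum_countable _ _ He) as [g Hg].
  exists (fun x => match f x with inl s => 2 * g s | inr n => Datatypes.S (2 * n) end).
  intros x y Vx Vy.
  destruct (f x) as [s|n] eqn:Ex; destruct (f y) as [s'|n'] eqn:Ey; intros Heq.
  - assert (g s = g s') by lia.
    destruct (Hlt x s Vx Ex). destruct (Hlt y s' Vy Ey).
    assert (s = s') by (apply Hg; auto). subst. apply Hf; congruence.
  - lia.
  - lia.
  - assert (n = n') by lia. subst. apply Hf; congruence.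
Qed.

Theorem lemma5p2 (V : Type) (adj : V -> V -> Prop) (U : V -> Prop) :
  simple_graph adj ->
  connected_graph adj ->
  (forall (I : Type) (adjH : I -> I -> Prop) (B : I -> V -> Prop),
      simple_graph adjH ->
      rooted_countable_minor_model adj U adjH B ->
      countable_colouring_number adjH) ->
  forall (T : Type) (le : T -> T -> Prop) (Vb : T -> V -> Prop),
    normal_semi_partition_tree adj le Vb ->
    slim le Vb ->
    U_rooted Vb U ->
    (forall C : T -> Prop, branch le C -> countable_set C) /\
    (forall t : T, countable_set (Vb t)).
Proof.
  intros Hsg Hconn Hminor T le Vb Hnst Hslim Hroot.
  destruct Hnst as [Hot [Hne [Hdisj [Hconnb [[Htg1 Htg] Hpath]]]]].
  destruct Hot as [Hrefl [Hanti [Htrans [Hroot1 Hwo]]]].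
  destruct Hsg as [Hadjsym Hadjirr].
  assert (Key : forall D : T -> Prop,
             (forall a b, D a -> D b -> comparable le a b) ->
             (forall a b, le a b -> D b -> D a) ->
             (forall t, D t -> enum (fun s => le s t)) ->
             ~ enum D -> False).
  { intros D Hch Hdc Hcnt Hunc.
    set (I := {t | D t}).
    set (adjH := fun a b : I => contracted_adj adj Vb (proj1_sig a) (proj1_sig b)).
    set (B := fun a : I => Vb (proj1_sig a)).
    assert (Hsigeq : forall a b : I, proj1_sig a = proj1_sig b -> a = b).
    { intros [a ha] [b hb]; simpl; intros ->. f_equal. apply proof_irrelevance. }
    assert (Hsym : forall a b, adjH a b -> adjH b a).
    { intros a b [Hn [u [v [H1 [H2 H3]]]]]. split; [congruence|].
      exists v, u. auto. }
    destruct (Hminor I adjH B) as [R [[Rirr [Rtr [Rtot Rwf]]] Hfin]].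
    - split; auto. intros a [Hn _]. auto.
    - split; [|split; [|split; [|split]]].
      + intros a. apply Hconnb.
      + intros a b v Hab H1 H2. apply (Hdisj (proj1_sig a) (proj1_sig b) v); auto.
      + intros a. apply Hroot.
      + intros a. apply (vb_count _ _ _ _ Hslim). apply Hcnt. apply proj2_sig.
      + intros a b [_ H]. exact H.
    - apply (pure _ (fun a b : I => le (proj1_sig a) (proj1_sig b)) adjH R).
      + intros; apply Hrefl.
      + intros a b H1 H2. apply Hsigeq. apply Hanti; auto.
      + intros a b c; apply Htrans.
      + intros a b. apply Hch; apply proj2_sig.
      + intros Q [x Qx].
        destruct (proj2 (Hwo (proj1_sig x)) (fun s => exists a : I, proj1_sig a = s /\ Q a))
          as [m [Hm1 [[a [<- Qa]] Hm3]]].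
        { exists (proj1_sig x). split; [apply Hrefl|]. eauto. }
        exists a. split; auto. intros y Qy.
        destruct (Hch (proj1_sig y) (proj1_sig x) (proj2_sig y) (proj2_sig x)) as [h|h].
        * apply Hm3; eauto.
        * eapply Htrans; eauto.
      + intros a. apply (enum_sig _ D (fun s => le s (proj1_sig a))). apply Hcnt. apply proj2_sig.
      + intros H. apply Hunc. apply enum_unsig. exact H.
      + intros a b H1 H2.
        destruct (Htg (proj1_sig a) (proj1_sig b)) as [u [Hu1 [[Hu2 Hu3] Hu4]]].
        { split; auto. }
        assert (Du : D u) by (apply (Hdc u (proj1_sig a)); auto; apply proj2_sig).
        exists (exist _ u Du). simpl. split; [exact Hu1|]. split; [exact Hu2|].
        split; [|exact Hu4]. intros E. apply Hu3. rewrite <- E. reflexivity.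
      + exact Hsym.
      + exact Rtot.
      + intros a. destruct (Hfin a) as [l Hl]. exists l. intros y H1 H2. apply Hl. split; auto. }
  assert (Claim : forall t, enum (fun s => le s t)).
  { intros t. apply NNPP. intros Ht.
    destruct (proj2 (Hwo t) (fun s => ~ enum (fun s' => le s' s))) as [m [Hm1 [Hm2 Hm3]]].
    { exists t. split; auto. }
    apply (Key (fun s => le s m /\ s <> m)).
    - intros a b [Ha _] [Hb _]. apply (proj1 (Hwo m)); auto.
    - intros a b Hab [Hb Hbm]. split; [eauto|]. intros ->. apply Hbm. apply Hanti; auto.
    - intros a [Ha Ham]. apply NNPP. intros Hn. apply Ham. apply Hanti; auto.
      apply Hm3; eauto.
    - intros HD. apply Hm2. apply enum_sub with (Q := fun s => (le s m /\ s <> m) \/ s = m).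
      + apply enum_or; auto. exists (fun _ => Some m). intros x ->. exists 0; auto.
      + intros s Hs. destruct (classic (s = m)); auto. }
  split.
  - intros C [Hch Hmaxl]. apply enum_countable. apply NNPP. intros Hn.
    apply (Key C); auto.
    intros a b Hab Cb.
    apply (Hmaxl (fun x => C x \/ le x b)); auto.
    intros x y [Cx|Lx] [Cy|Ly].
    + auto.
    + destruct (Hch x b Cx Cb) as [h|h].
      * apply (proj1 (Hwo b)); auto.
      * right. eauto.
    + destruct (Hch y b Cy Cb) as [h|h].
      * apply (proj1 (Hwo b)); auto.
      * left. eauto.
    + apply (proj1 (Hwo b)); auto.
  - intros t. apply (vb_count _ _ _ _ Hslim). apply Claim.
Qed.
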